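(* If the formal deformations $(\{\cdot,\cdot\}^{[a,b,c]}_n)_{n\ge0}$ and $(\{\cdot,\cdot\}^{[a',b',c']}_n)_{n\ge0}$ of $\widetilde J$ are modular-isomorphic, then $c=c'$ and there exists $\xi\in\mathbb{C}^*$ such that $a'=\xi a$ and $b'=\xi^{-1}b$.
   Context: Let $\widetilde J=\mathbb{C}[E_4,E_6,A,B]$ be the polynomial algebra in four algebraically independent variables, bigraded by weight and index, where $E_4$ has weight $4$ and index $0$, $E_6$ has weight $6$ and index $0$, $A$ has weight $-2$ and index $1$, $B$ has weight $0$ and index $1$; $\widetilde J_{k,p}$ denotes the homogeneous component of weight $k$ and index $p$. For $(a,b)\in\mathbb{C}^2$, $S_{a,b}$ is the derivation of $\widetilde J$ with $S_{a,b}(E_4)=-\tfrac13E_6$, $S_{a,b}(E_6)=-\tfrac12E_4^2$, $S_{a,b}(A)=aB$, $S_{a,b}(B)=bE_4A$. For $c\in\mathbb{C}$ and $n\ge0$, $\{\cdot,\cdot\}^{[a,b,c]}_n$ is the bilinear map on $\widetilde J$ defined on homogeneous $f\in\widetilde J_{k,p}$, $g\in\widetilde J_{\ell,q}$ by $\{f,g\}^{[a,b,c]}_n=\sum_{r=0}^n(-1)^r\binom{k+cp+n-1}{n-r}\binom{\ell+cq+n-1}{r}S_{a,b}^r(f)\,S_{a,b}^{n-r}(g)$ (complex binomial coefficients). Two such formal deformations $(\{\cdot,\cdot\}^{[a,b,c]}_n)_n$ and $(\{\cdot,\cdot\}^{[a',b',c']}_n)_n$ are modular-isomorphic if there is a $\mathbb{C}$-linear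 bijection $\phi:\widetilde J\to\widetilde J$ mapping each $\widetilde J_{k,p}$ into $\widetilde J_{k,p}$ and such that $\phi(\{f,g\}^{[a,b,c]}_j)=\{\phi(f),\phi(g)\}^{[a',b',c']}_j$ for all $j\ge0$ and $f,g\in\widetilde J$. *)

(* Defs.v *)
From HB Require Import structures.
From mathcomp Require Import all_boot all_order all_algebra.
Set Implicit Arguments. Unset Strict Implicit. Unset Printing Implicit Defensive.
Import Order.TTheory GRing.Theory Num.Theory.
Local Open Scope ring_scope.

Section Jtilde.
Variable C : numClosedFieldType.

(* J~ = C[E4][E6][A][B] as nested univariate polynomials:
   innermost variable E4, then E6, then A, outermost B. *)
Definition Jt := {poly {poly {poly {poly C}}}}.

Definition cst (z : C) : Jt := (((z%:P)%:P)%:P)%:P.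
Definition vE4 : Jt := ((('X)%:P)%:P)%:P.
Definition vE6 : Jt := (('X)%:P)%:P.
Definition vA : Jt := ('X)%:P.
Definition vB : Jt := 'X.

Definition coefJ (f : Jt) (x y i j : nat) : C := f`_j`_i`_y`_x.

Definition mono (x y i j : nat) : Jt := vE4 ^+ x * vE6 ^+ y * vA ^+ i * vB ^+ j.

Definition wt (x y i : nat) : int := (4 * x + 6 * y)%:Z - (2 * i)%:Z.
Definition idx (i j : nat) : nat := (i + j)%N.

Definition homog (k : int) (p : nat) (f : Jt) : Prop :=
  forall x y i j, coefJ f x y i j != 0 -> wt x y i = k /\ idx i j = p.

Definition dB (f : Jt) : Jt := deriv f.
Definition dA (f : Jt) : Jt := map_poly (@deriv _) f.
Definition dE6 (f : Jt) : Jt := map_poly (map_poly (@deriv _)) f.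
Definition dE4 (f : Jt) : Jt := map_poly (map_poly (map_poly (@deriv _))) f.

Definition S (a b : C) (f : Jt) : Jt :=
  dE4 f * (cst (- (1 / 3%:R)) * vE6) + dE6 f * (cst (- (1 / 2%:R)) * vE4 ^+ 2)
  + dA f * (cst a * vB) + dB f * (cst b * vE4 * vA).

Definition Sit (a b : C) (r : nat) (f : Jt) : Jt := iter r (S a b) f.

Definition binomC (z : C) (m : nat) : C :=
  (\prod_(t < m) (z - t%:R)) / (m`!)%:R.

(* the bracket on homogeneous f in J~_{k,p}, g in J~_{l,q} *)
Definition brk_hom (a b c : C) (n : nat) (k : int) (p : nat) (l : int) (q : nat)
    (f g : Jt) : Jt :=
  \sum_(r < n.+1)
    cst ((-1) ^+ r * binomC (k%:~R + c * p%:R + n%:R - 1) (n - r)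
                   * binomC (l%:~R + c * q%:R + n%:R - 1) r)
    * (Sit a b r f * Sit a b (n - r) g).

(* bilinear extension to all of J~ (via the monomial basis) *)
Definition bracket (a b c : C) (n : nat) (f g : Jt) : Jt :=
  \sum_(j < size f) \sum_(i < size f`_j) \sum_(y < size f`_j`_i)
   \sum_(x < size f`_j`_i`_y)
  \sum_(j' < size g) \sum_(i' < size g`_j') \sum_(y' < size g`_j'`_i')
   \sum_(x' < size g`_j'`_i'`_y')
    cst (coefJ f x y i j * coefJ g x' y' i' j')
    * brk_hom a b c n (wt x y i) (idx i j) (wt x' y' i') (idx i' j')
        (mono x y i j) (mono x' y' i' j').

Definition clinear (phi : Jt -> Jt) : Prop :=
  forall (z : C) (f g : Jt), phi (cst z * f + g) = cst z * phi f + phi g.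

Definition modular_isomorphic (a b c a' b' c' : C) : Prop :=
  exists phi : Jt -> Jt,
    [/\ clinear phi, bijective phi,
        (forall k p f, homog k p f -> homog k p (phi f)) &
        (forall n f g, phi (bracket a b c n f g) = bracket a' b' c' n (phi f) (phi g))].

End Jtilde.

(* Main.v *)
Require Import Defs.
From HB Require Import structures.
From mathcomp Require Import all_boot all_order all_algebra.
From mathcomp Require Import ring zify.
Import GRing.Theory Num.Theory.
Local Open Scope ring_scope.
Section T.
Variable C : numClosedFieldType.
Local Notation Jt := (Jt C).
Local Notation cst := (@cst C).
Local Notation mono := (@mono C).
Local Notation coefJ := (@coefJ C).
Definition NF (u : C) x y i j : Jt := ((((u%:P * 'X^x)%:P * 'X^y)%:P * 'X^i)%:P) * 'X^j.
Lemma cmonoE u x y i j : cst u * mono x y i j = NF u x y i j.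
Proof. by rewrite /cst /mono /NF /vE4 /vE6 /vA /vB -!rmorphXn !mulrA -!rmorphM. Qed.
Lemma cst0 : cst 0 = 0. Proof. by rewrite /cst !rmorph0. Qed.
Lemma cst1 : cst 1 = 1. Proof. by rewrite /cst (@polyC1 C) (@polyC1 {poly C}) (@polyC1 {poly {poly C}}) (@polyC1 {poly {poly {poly C}}}). Qed.
Lemma cstM u v : cst (u * v) = cst u * cst v. Proof. by rewrite /cst !rmorphM. Qed.
Lemma cstD u v : cst (u + v) = cst u + cst v. Proof. by rewrite /cst !rmorphD. Qed.
Lemma cstN u : cst (- u) = - cst u. Proof. by rewrite /cst !rmorphN. Qed.

Lemma coefCXn (R : nzRingType) (q : R) n k : (q%:P * 'X^n)`_k = if k == n then q else 0.
Proof.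
rewrite coefMXn coefC; case: (ltngtP k n) => [lt|gt|->]; rewrite ?subnn ?eqxx //.
by rewrite subn_eq0 leqNgt gt.
Qed.
Lemma size_CXn (R : nzRingType) (q : R) n : q != 0 -> size (q%:P * 'X^n) = n.+1.
Proof. by move=> q0; rewrite size_mulXn ?polyC_eq0 // size_polyC q0 addn1. Qed.

Lemma CXn_neq0 (R : nzRingType) (q : R) n : q != 0 -> q%:P * 'X^n != 0.
Proof. by move=> q0; rewrite -size_poly_eq0 size_CXn. Qed.

Lemma coefJ_NF u x0 y0 i0 j0 x y i j :
  coefJ (NF u x0 y0 i0 j0) x y i j = if [&& x == x0, y == y0, i == i0 & j == j0] then u else 0.
Proof.
rewrite /coefJ /NF coefCXn; case: (j =P j0) => _; last by rewrite !coef0 !andbF.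
rewrite coefCXn; case: (i =P i0) => _; last by rewrite !coef0 !andbF.
rewrite coefCXn; case: (y =P y0) => _; last by rewrite !coef0 !andbF.
rewrite coefCXn; case: (x =P x0) => _; by rewrite ?andbF ?andbT.
Qed.
Lemma NF_neq0 u x y i j : u != 0 -> NF u x y i j != 0.
Proof. move=> u0; apply/eqP => /(congr1 (fun f => coefJ f x y i j)).
rewrite coefJ_NF !eqxx /coefJ !coef0 => /eqP; exact/negP. Qed.

Lemma cst0M z (f : Jt) : cst (0 * z) * f = 0. Proof. by rewrite (mul0r z) cst0 (mul0r f). Qed.
Lemma cstM0 z (f : Jt) : cst (z * 0) * f = 0. Proof. by rewrite (mulr0 z) cst0 (mul0r f). Qed.
Ltac lvl := rewrite size_CXn; [rewrite big_ord_recr /= big1 ?add0r;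
  [|let k := fresh "k" in by move=> k _; rewrite coefCXn (ltn_eqF (ltn_ord k)) size_poly0 big_ord0];
  rewrite coefCXn eqxx | by repeat apply: CXn_neq0].

Lemma bracket_NF a b c n u v x y i j x' y' i' j' : u != 0 -> v != 0 ->
  bracket a b c n (NF u x y i j) (NF v x' y' i' j') =
  cst (u * v) * brk_hom a b c n (wt x y i) (idx i j) (wt x' y' i') (idx i' j')
     (mono x y i j) (mono x' y' i' j').
Proof.
move=> u0 v0; rewrite /bracket /NF.
do 3 lvl.
rewrite -/(NF u x y i j) -/(NF v x' y' i' j').
rewrite size_CXn // big_ord_recr /= big1 ?add0r; last first.
  move=> k _; rewrite coefJ_NF (ltn_eqF (ltn_ord k)) /=.
  apply: big1 => ? _; apply: big1 => ? _; apply: big1 => ? _; apply: big1 => ? _.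
  by rewrite cst0M.
rewrite coefJ_NF !eqxx /=.
rewrite /NF; do 3 lvl.
rewrite -/(NF v x' y' i' j').
rewrite size_CXn // big_ord_recr /= big1 ?add0r; last first.
  by move=> k _; rewrite coefJ_NF (ltn_eqF (ltn_ord k)) /= cstM0.
by rewrite coefJ_NF !eqxx.
Qed.

Lemma binomC0 (z : C) : binomC z 0 = 1.
Proof. by rewrite /binomC big_ord0 /= divr1. Qed.
Lemma binomC1 (z : C) : binomC z 1 = z.
Proof. by rewrite /binomC big_ord1 /= subr0 divr1. Qed.

Lemma brk0 a b c k p l q (f g : Jt) : brk_hom a b c 0 k p l q f g = f * g.
Proof.
rewrite /brk_hom big_ord1 /=.
have -> : (-1) ^+ 0 * binomC (k%:~R + c * p%:R + 0%:R - 1) 0 *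
   binomC (l%:~R + c * q%:R + 0%:R - 1) 0 = 1 by rewrite expr0 !binomC0 !mulr1.
by rewrite cst1 (mul1r (f * g)).
Qed.

Lemma brk1 a b c k p l q (f g : Jt) : brk_hom a b c 1 k p l q f g =
  cst (k%:~R + c * p%:R) * (f * S a b g) - cst (l%:~R + c * q%:R) * (S a b f * g).
Proof.
rewrite /brk_hom big_ord_recr big_ord1 /=.
have -> : (-1) ^+ 0 * binomC (k%:~R + c * p%:R + 1%:R - 1) 1 *
   binomC (l%:~R + c * q%:R + 1%:R - 1) 0 = k%:~R + c * p%:R
   by rewrite expr0 binomC1 binomC0 mulr1 mul1r addrK.
have -> : (-1) ^+ 1 * binomC (k%:~R + c * p%:R + 1%:R - 1) 0 *
   binomC (l%:~R + c * q%:R + 1%:R - 1) 1 = - (l%:~R + c * q%:R)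
   by rewrite expr1 binomC1 binomC0 mulr1 mulN1r addrK.
by rewrite cstN mulNr.
Qed.

Lemma map_polyX0 (R S : nzRingType) (h : {additive R -> S}) : h 1 = 0 -> map_poly h 'X = 0.
Proof.
move=> h1; apply/polyP => k; rewrite coef_map coefX coef0.
by case: (k == 1%N); rewrite ?raddf0 // h1.
Qed.
End T.

Section T.
Variable C : numClosedFieldType.
Local Notation Jt := (Jt C).
Local Notation cst := (@cst C).
Local Notation mono := (@mono C).
Local Notation coefJ := (@coefJ C).
Local Notation E4 := (vE4 C).
Local Notation E6 := (vE6 C).
Local Notation A := (vA C).
Local Notation B := (vB C).

Lemma mapC (R S : nzRingType) (h : R -> S) c : h 0 = 0 -> map_poly h c%:P = (h c)%:P.
Proof. move=> h0; apply/polyP => k; rewrite coef_map_id0 // !coefC; by case: (k == 0%N). Qed.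
Lemma mapX0 (R S : nzRingType) (h : R -> S) : h 0 = 0 -> h 1 = 0 -> map_poly h 'X = 0.
Proof.
move=> h0 h1; apply/polyP => k; rewrite coef_map_id0 // coefX coef0.
by case: (k == 1%N).
Qed.
Lemma derivC0 (R : nzRingType) : deriv (0 : {poly R}) = 0. Proof. exact: deriv0. Qed.
Lemma derivC1 (R : nzRingType) : deriv (1 : {poly R}) = 0. Proof. exact: (derivC 1). Qed.

Lemma dB_E4 : dB E4 = 0. Proof. by rewrite /dB /vE4 derivC. Qed.
Lemma dB_E6 : dB E6 = 0. Proof. by rewrite /dB /vE6 derivC. Qed.
Lemma dB_A : dB A = 0. Proof. by rewrite /dB /vA derivC. Qed.
Lemma dB_B : dB B = 1. Proof. by rewrite /dB /vB derivX. Qed.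
Lemma dA_E4 : dA E4 = 0. Proof. by rewrite /dA /vE4 map_polyC /= derivC (@polyC0 {poly {poly {poly C}}}). Qed.
Lemma dA_E6 : dA E6 = 0. Proof. by rewrite /dA /vE6 map_polyC /= derivC (@polyC0 {poly {poly {poly C}}}). Qed.
Lemma dA_A : dA A = 1. Proof. by rewrite /dA /vA map_polyC /= derivX (@polyC1 {poly {poly {poly C}}}). Qed.
Lemma dA_B : dA B = 0. Proof. by rewrite /dA /vB map_polyX0 //; exact: (derivC 1). Qed.

Lemma dE6_E4 : dE6 E4 = 0.
Proof. by rewrite /dE6 /vE4 !mapC ?derivC0 ?derivC ?(@polyC0 {poly {poly C}}) ?(@polyC0 {poly {poly {poly C}}}) // mapC ?derivC0. Qed.
Lemma dE6_E6 : dE6 E6 = 1.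
Proof. rewrite /dE6 /vE6 mapC; last exact: map_poly0. rewrite mapC; last exact: derivC0. 
by rewrite derivX (@polyC1 {poly {poly C}}) (@polyC1 {poly {poly {poly C}}}). Qed.
Lemma dE6_A : dE6 A = 0.
Proof. rewrite /dE6 /vA mapC; last exact: map_poly0. rewrite mapX0; [|exact: derivC0|exact: derivC1].
exact: (@polyC0 {poly {poly {poly C}}}). Qed.
Lemma dE6_B : dE6 B = 0.
Proof. rewrite /dE6 /vB mapX0 //; first exact: map_poly0.
rewrite -(@polyC1 {poly {poly C}}) mapC; last exact: derivC0.
by rewrite derivC1 (@polyC0 {poly {poly C}}). Qed.
Lemma dE4_E4 : dE4 E4 = 1.
Proof. rewrite /dE4 /vE4 mapC; last exact: map_poly0. rewrite mapC; last exact: map_poly0.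
rewrite mapC; last exact: derivC0.
by rewrite derivX (@polyC1 {poly C}) (@polyC1 {poly {poly C}}) (@polyC1 {poly {poly {poly C}}}). Qed.
Lemma dE4_E6 : dE4 E6 = 0.
Proof. rewrite /dE4 /vE6 mapC; last exact: map_poly0. rewrite mapC; last exact: map_poly0.
rewrite mapX0; [|exact: derivC0|exact: derivC1].
by rewrite (@polyC0 {poly {poly C}}) (@polyC0 {poly {poly {poly C}}}). Qed.
Lemma dE4_A : dE4 A = 0.
Proof. rewrite /dE4 /vA mapC; last exact: map_poly0. rewrite mapX0; first exact: (@polyC0 {poly {poly {poly C}}}).
  exact: map_poly0.
rewrite -(@polyC1 {poly C}) mapC; last exact: derivC0.
by rewrite derivC1 (@polyC0 {poly C}). Qed.
Lemma dE4_B : dE4 B = 0.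
Proof. rewrite /dE4 /vB mapX0 //; first exact: map_poly0.
rewrite -(@polyC1 {poly {poly C}}) mapC; last exact: map_poly0.
rewrite -(@polyC1 {poly C}) mapC; last exact: derivC0.
by rewrite derivC1 (@polyC0 {poly C}) (@polyC0 {poly {poly C}}). Qed.

Lemma lin1 (x y z w : Jt) : 1 * x + 0 * y + 0 * z + 0 * w = x.
Proof.
transitivity (x + 0 + 0 + 0); first by congr (_ + _ + _ + _); [exact: mul1r|exact: mul0r|exact: mul0r|exact: mul0r].
by rewrite !addr0.
Qed.
Lemma lin2 (x y z w : Jt) : 0 * x + 1 * y + 0 * z + 0 * w = y.
Proof.
transitivity (0 + y + 0 + 0); first by congr (_ + _ + _ + _); [exact: mul0r|exact: mul1r|exact: mul0r|exact: mul0r].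
by rewrite !addr0 add0r.
Qed.
Lemma lin3 (x y z w : Jt) : 0 * x + 0 * y + 1 * z + 0 * w = z.
Proof.
transitivity (0 + 0 + z + 0); first by congr (_ + _ + _ + _); [exact: mul0r|exact: mul0r|exact: mul1r|exact: mul0r].
by rewrite addr0 add0r add0r.
Qed.
Lemma lin4 (x y z w : Jt) : 0 * x + 0 * y + 0 * z + 1 * w = w.
Proof.
transitivity (0 + 0 + 0 + w); first by congr (_ + _ + _ + _); [exact: mul0r|exact: mul0r|exact: mul0r|exact: mul1r].
by rewrite !add0r.
Qed.
Lemma S_E4 a b : S a b E4 = cst (- (1 / 3%:R)) * E6.
Proof. rewrite /S dE4_E4 dE6_E4 dA_E4 dB_E4. exact: lin1. Qed.
Lemma S_E6 a b : S a b E6 = cst (- (1 / 2%:R)) * E4 ^+ 2.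
Proof. rewrite /S dE4_E6 dE6_E6 dA_E6 dB_E6. exact: lin2. Qed.
Lemma S_A a b : S a b A = cst a * B.
Proof. rewrite /S dE4_A dE6_A dA_A dB_A. exact: lin3. Qed.
Lemma S_B a b : S a b B = cst b * E4 * A.
Proof. rewrite /S dE4_B dE6_B dA_B dB_B. exact: lin4. Qed.
End T.

Section T.
Variable C : numClosedFieldType.
Local Notation Jt := (Jt C).
Local Notation cst := (@cst C).
Local Notation mono := (@mono C).
Local Notation coefJ := (@coefJ C).
Local Notation NF := (@NF C).

Lemma coefJ_inj (f g : Jt) : (forall x y i j, coefJ f x y i j = coefJ g x y i j) -> f = g.
Proof.
move=> H; apply/polyP => j; apply/polyP => i; apply/polyP => y; apply/polyP => x; exact: H.
Qed.
Lemma coefJD (f g : Jt) x y i j : coefJ (f + g) x y i j = coefJ f x y i j + coefJ g x y i j.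
Proof. by rewrite /coefJ !coefD. Qed.
Lemma coefJcM z (f : Jt) x y i j : coefJ (cst z * f) x y i j = z * coefJ f x y i j.
Proof. by rewrite /coefJ /cst !coefCM. Qed.
Lemma coefJ0 x y i j : coefJ 0 x y i j = 0.
Proof. by rewrite /coefJ !coef0. Qed.
Lemma NF0 x y i j : NF 0 x y i j = 0.
Proof. apply: coefJ_inj => ? ? ? ?; rewrite coefJ_NF coefJ0; by case: ifP. Qed.
Lemma homog_NF u x y i j : homog (wt x y i) (idx i j) (NF u x y i j).
Proof.
move=> x' y' i' j'; rewrite coefJ_NF; case: ifP => [/and4P [/eqP-> /eqP-> /eqP-> /eqP->] //|].
by rewrite eqxx.
Qed.
Lemma NFscale K x y i j : NF K x y i j = cst K * NF 1 x y i j.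
Proof. rewrite -!cmonoE cst1; congr (_ * _); exact: (esym (mul1r _)). Qed.
Lemma onedim k p x0 y0 i0 j0 (f : Jt) :
  (forall x y i j, wt x y i = k -> idx i j = p -> [/\ x = x0, y = y0, i = i0 & j = j0]) ->
  homog k p f -> f = NF (coefJ f x0 y0 i0 j0) x0 y0 i0 j0.
Proof.
move=> H hf; apply: coefJ_inj => x y i j; rewrite coefJ_NF.
case: ifP => [/and4P [/eqP-> /eqP-> /eqP-> /eqP->] // | ne].
apply/eqP; apply: contraT => nz. have [w e] := hf _ _ _ _ nz.
have [e1 e2 e3 e4] := H _ _ _ _ w e. by rewrite e1 e2 e3 e4 !eqxx in ne.
Qed.
Lemma od_E4 x y i j : wt x y i = wt 1 0 0 -> idx i j = idx 0 0 -> [/\ x = 1%N, y = 0%N, i = 0%N & j = 0%N].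
Proof. rewrite /wt /idx => h1 h2. split; lia. Qed.
Lemma od_E6 x y i j : wt x y i = wt 0 1 0 -> idx i j = idx 0 0 -> [/\ x = 0%N, y = 1%N, i = 0%N & j = 0%N].
Proof. rewrite /wt /idx => h1 h2. split; lia. Qed.
Lemma od_A x y i j : wt x y i = wt 0 0 1 -> idx i j = idx 1 0 -> [/\ x = 0%N, y = 0%N, i = 1%N & j = 0%N].
Proof. rewrite /wt /idx => h1 h2. split; lia. Qed.
Lemma od_B x y i j : wt x y i = wt 0 0 0 -> idx i j = idx 0 1 -> [/\ x = 0%N, y = 0%N, i = 0%N & j = 1%N].
Proof. rewrite /wt /idx => h1 h2. split; lia. Qed.
End T.


Lemma monoM_gen (R : comRingType) (a b c d : R) x y i j x' y' i' j' :
  a^+x*b^+y*c^+i*d^+j * (a^+x'*b^+y'*c^+i'*d^+j') = a^+(x+x')*b^+(y+y')*c^+(i+i')*d^+(j+j').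
Proof. rewrite !exprD; ring. Qed.
Lemma g_gen (R : comRingType) (a b c d : R) x y i j :
  a^+x*b^+y*c^+i*d^+j = a^+x*b^+y*c^+i*d^+j. Proof. by []. Qed.

Lemma g1000 (R : comRingType) (a b c d : R) : a^+1*b^+0*c^+0*d^+0 = a. Proof. ring. Qed.
Lemma g0100 (R : comRingType) (a b c d : R) : a^+0*b^+1*c^+0*d^+0 = b. Proof. ring. Qed.
Lemma g0010 (R : comRingType) (a b c d : R) : a^+0*b^+0*c^+1*d^+0 = c. Proof. ring. Qed.
Lemma g0001 (R : comRingType) (a b c d : R) : a^+0*b^+0*c^+0*d^+1 = d. Proof. ring. Qed.
Lemma g3000 (R : comRingType) (a b c d : R) : a^+3*b^+0*c^+0*d^+0 = a^+3. Proof. ring. Qed.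
Lemma g0200 (R : comRingType) (a b c d : R) : a^+0*b^+2*c^+0*d^+0 = b^+2. Proof. ring. Qed.
Lemma g1001 (R : comRingType) (a b c d : R) : a^+1*b^+0*c^+0*d^+1 = a*d. Proof. ring. Qed.
Lemma g0110 (R : comRingType) (a b c d : R) : a^+0*b^+1*c^+1*d^+0 = b*c. Proof. ring. Qed.
Lemma g2010 (R : comRingType) (a b c d : R) : a^+2*b^+0*c^+1*d^+0 = a^+2*c. Proof. ring. Qed.
Lemma g0101 (R : comRingType) (a b c d : R) : a^+0*b^+1*c^+0*d^+1 = b*d. Proof. ring. Qed.

Lemma G1 (R : comRingType) (w k z l t e4 e6 : R) :
  w * (k * (e4 * (z * e4^+2)) - l * (t * e6 * e6)) = w * (k * z) * e4^+3 + w * - (l * t) * e6^+2.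
Proof. ring. Qed.

Lemma G2 (R : comRingType) (w k z l t e4 e6 ea eb : R) :
  w * (k * (e4 * (z * eb)) - l * (t * e6 * ea)) = w * (k * z) * (e4 * eb) + w * - (l * t) * (e6 * ea).
Proof. ring. Qed.
Lemma G3 (R : comRingType) (w k z l t e4 e6 ea eb : R) :
  w * (k * (e4 * (z * e4 * ea)) - l * (t * e6 * eb)) = w * (k * z) * (e4^+2 * ea) + w * - (l * t) * (e6 * eb).
Proof. ring. Qed.

Section T.
Variable C : numClosedFieldType.
Local Notation Jt := (Jt C).
Local Notation cst := (@cst C).
Local Notation mono := (@mono C).
Local Notation coefJ := (@coefJ C).
Local Notation NF := (@NF C).

Lemma bracket0_NF a b c u v x y i j x' y' i' j' : u != 0 -> v != 0 ->
  bracket a b c 0 (NF u x y i j) (NF v x' y' i' j') = NF (u*v) (x+x') (y+y') (i+i') (j+j').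
Proof.
move=> u0 v0; rewrite bracket_NF // brk0 -cmonoE. congr (_ * _). exact: monoM_gen.
Qed.

Lemma br_E4E6 a b c u v : u != 0 -> v != 0 ->
  bracket a b c 1 (NF u 1 0 0 0) (NF v 0 1 0 0) =
  NF (u * v * (4 * (- (1 / 2%:R)))) 3 0 0 0 + NF (u * v * (- (6 * (- (1 / 3%:R))))) 0 2 0 0.
Proof.
Time (move=> u0 v0; rewrite bracket_NF // brk1).
have -> : mono 1 0 0 0 = vE4 C by exact: g1000.
have -> : mono 0 1 0 0 = vE6 C by exact: g0100.
Time rewrite S_E4 S_E6.
have -> : (wt 1 0 0)%:~R + c * (idx 0 0)%:R = 4 :> C by rewrite mulr0 addr0.
have -> : (wt 0 1 0)%:~R + c * (idx 0 0)%:R = 6 :> C by rewrite mulr0 addr0.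
Time rewrite -!cmonoE.
have -> : mono 3 0 0 0 = vE4 C ^+ 3 by exact: g3000.
have -> : mono 0 2 0 0 = vE6 C ^+ 2 by exact: g0200.
rewrite (@cstM C (u * v) (4 * _)) (@cstM C 4) (@cstM C (u * v) (- _)) (@cstN C (6 * _)) (@cstM C 6).
Time exact: G1.
Qed.

Lemma br_E4A a b c u v : u != 0 -> v != 0 ->
  bracket a b c 1 (NF u 1 0 0 0) (NF v 0 0 1 0) =
  NF (u * v * (4 * a)) 1 0 0 1 + NF (u * v * (- ((c - 2) * (- (1 / 3%:R))))) 0 1 1 0.
Proof.
move=> u0 v0; rewrite bracket_NF // brk1.
have -> : mono 1 0 0 0 = vE4 C by exact: g1000.
have -> : mono 0 0 1 0 = vA C by exact: g0010.
rewrite S_E4 S_A.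
have -> : (wt 1 0 0)%:~R + c * (idx 0 0)%:R = 4 :> C by rewrite mulr0 addr0.
have -> : (wt 0 0 1)%:~R + c * (idx 1 0)%:R = c - 2 :> C by rewrite mulr1 addrC.
rewrite -!cmonoE.
have -> : mono 1 0 0 1 = vE4 C * vB C by exact: g1001.
have -> : mono 0 1 1 0 = vE6 C * vA C by exact: g0110.
rewrite (@cstM C (u * v) (4 * _)) (@cstM C 4) (@cstM C (u * v) (- _)) (@cstN C ((c - 2) * _)) (@cstM C (c - 2)).
exact: G2.
Qed.

Lemma br_E4B a b c u v : u != 0 -> v != 0 ->
  bracket a b c 1 (NF u 1 0 0 0) (NF v 0 0 0 1) =
  NF (u * v * (4 * b)) 2 0 1 0 + NF (u * v * (- (c * (- (1 / 3%:R))))) 0 1 0 1.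
Proof.
move=> u0 v0; rewrite bracket_NF // brk1.
have -> : mono 1 0 0 0 = vE4 C by exact: g1000.
have -> : mono 0 0 0 1 = vB C by exact: g0001.
rewrite S_E4 S_B.
have -> : (wt 1 0 0)%:~R + c * (idx 0 0)%:R = 4 :> C by rewrite mulr0 addr0.
have -> : (wt 0 0 0)%:~R + c * (idx 0 1)%:R = c :> C by rewrite mulr1 add0r.
rewrite -!cmonoE.
have -> : mono 2 0 1 0 = vE4 C ^+ 2 * vA C by exact: g2010.
have -> : mono 0 1 0 1 = vE6 C * vB C by exact: g0101.
rewrite (@cstM C (u * v) (4 * _)) (@cstM C 4) (@cstM C (u * v) (- _)) (@cstN C (c * _)) (@cstM C c).
exact: G3.
Qed.
End T.


Lemma finalC (C : numClosedFieldType) (a b c a' b' c' al be ga de : C) :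
 al != 0 -> be != 0 -> ga != 0 -> de != 0 ->
 1*1*(4 * - (1/2%:R)) * (al*al*al) = al*be*(4 * - (1/2%:R)) ->
 1*1*(- (6 * - (1/3%:R))) * (be*be) = al*be*(- (6 * - (1/3%:R))) ->
 1*1*(4*a)*(al*de) = al*ga*(4*a') ->
 1*1*(- ((c-2) * - (1/3%:R)))*(be*ga) = al*ga*(- ((c'-2) * - (1/3%:R))) ->
 1*1*(4*b)*(al*al*ga) = al*de*(4*b') ->
 c = c' /\ exists xi : C, [/\ xi != 0, a' = xi * a & b' = xi^-1 * b].
Proof.
move=> al0 be0 ga0 de0 e1 e2 e3 e4 e5.
have n2 : (2%:R : C) != 0 by rewrite pnatr_eq0.
have n3 : (3%:R : C) != 0 by rewrite pnatr_eq0.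
have n4 : (4%:R : C) != 0 by rewrite pnatr_eq0.
have n6 : (6%:R : C) != 0 by rewrite pnatr_eq0.
have K4 : 4 * - (1/2%:R) != 0 :> C by rewrite mulf_neq0 // oppr_eq0 mul1r invr_eq0.
have K3 : - (1/3%:R) != 0 :> C by rewrite oppr_eq0 mul1r invr_eq0.
have K6 : - (6 * - (1/3%:R)) != 0 :> C by rewrite oppr_eq0 mulf_neq0.
have f1 : al * al = be.
  apply: (mulfI (mulf_neq0 K4 al0)).
  by transitivity (1*1*(4 * - (1/2%:R)) * (al*al*al)); [ring | rewrite e1; ring].
have f2 : be = al.
  apply: (mulfI (mulf_neq0 K6 be0)).
  by transitivity (1*1*(- (6 * - (1/3%:R))) * (be*be)); [ring | rewrite e2; ring].
have al1 : al = 1.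
  apply: (mulIf al0); by rewrite mul1r f1 f2.
have be1 : be = 1 by rewrite f2.
subst al be.
split.
  have : (c - 2) = (c' - 2).
    have K3' : - (- (1/3%:R)) != 0 :> C by rewrite oppr_eq0.
    apply: (mulfI (mulf_neq0 K3' ga0)).
    by transitivity (1*1*(- ((c-2) * - (1/3%:R)))*(1*ga)); [ring | rewrite e4; ring].
  by move/addIr.
exists (de / ga); split.
- by rewrite mulf_neq0 // invr_eq0.
- apply: (mulfI (mulf_neq0 n4 ga0)).
  transitivity (1*ga*(4*a')); first ring.
  by rewrite -e3; field.
- rewrite invf_div.
  apply: (mulfI (mulf_neq0 n4 de0)).
  transitivity (1*de*(4*b')); first ring.
  by rewrite -e5; field.
Qed.


Arguments NF {C}.
Arguments cmonoE {C}.
Arguments cst1 {C}.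
Arguments cstM {C}.
Arguments cstN {C}.
Arguments coefJ_NF {C}.
Arguments NF_neq0 {C}.
Arguments coefJD {C}.
Arguments coefJcM {C}.
Arguments coefJ0 {C}.
Arguments NF0 {C}.
Arguments homog_NF {C}.
Arguments NFscale {C}.
Arguments onedim {C}.
Arguments bracket0_NF {C}.
Arguments br_E4E6 {C}.
Arguments br_E4A {C}.
Arguments br_E4B {C}.

Lemma NF2_coef (C : numClosedFieldType) (u1 u2 v1 v2 : C) x y i j x' y' i' j' : x != x' ->
  NF u1 x y i j + NF u2 x' y' i' j' = NF v1 x y i j + NF v2 x' y' i' j' -> u1 = v1 /\ u2 = v2.
Proof.
move=> nx h; split.
  have := congr1 (fun f => coefJ f x y i j) h; cbv beta; rewrite coefJD coefJD !coefJ_NF !eqxx /=.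
  by rewrite (negbTE nx) /= !addr0.
have := congr1 (fun f => coefJ f x' y' i' j') h; cbv beta; rewrite coefJD coefJD !coefJ_NF !eqxx /=.
by rewrite eq_sym (negbTE nx) /= !add0r.
Qed.
Opaque NF Defs.cst.



Lemma cstNF (C : numClosedFieldType) (K u : C) x y i j : cst K * NF u x y i j = NF (K * u) x y i j.
Proof. by rewrite -!cmonoE mulrA -cstM. Qed.

Lemma phi2 (C : numClosedFieldType) (phi : Jt C -> Jt C)
  (hD : forall f g : Jt C, phi (f + g) = phi f + phi g)
  (hN : forall (K : C) x y i j, phi (NF K x y i j) = cst K * phi (NF 1 x y i j))
  (K1 K2 u1 u2 : C) x y i j x' y' i' j' :
  phi (NF 1 x y i j) = NF u1 x y i j -> phi (NF 1 x' y' i' j') = NF u2 x' y' i' j' ->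
  phi (NF K1 x y i j + NF K2 x' y' i' j') = NF (K1*u1) x y i j + NF (K2*u2) x' y' i' j'.
Proof. by move=> h1 h2; rewrite hD hN h1 (hN K2) h2 !cstNF. Qed.

Arguments phi2 {C}.

Theorem mainTheorem3 (C : numClosedFieldType) (a b c a' b' c' : C) :
  modular_isomorphic a b c a' b' c' ->
  c = c' /\ exists xi : C, [/\ xi != 0, a' = xi * a & b' = xi^-1 * b].
Proof.
case=> phi [lin bij hom brk].
have phiD (f g : Jt C) : phi (f + g) = phi f + phi g.
  by have := lin 1 f g; rewrite cst1 (mul1r f) (mul1r (phi f)).
have phi0 : phi 0 = 0.
  have h := phiD 0 0; rewrite (addr0 (0 : Jt C)) in h.
  have : phi 0 + 0 = phi 0 + phi 0 by rewrite addr0.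
  by move/addrI.
have phiS z (f : Jt C) : phi (cst z * f) = cst z * phi f.
  by have := lin z f 0; rewrite phi0 (addr0 (cst z * f)) (addr0 (cst z * phi f)).
have inj : injective phi := bij_inj bij.
have phiNF K x y i j : phi (NF K x y i j) = cst K * phi (NF 1 x y i j).
  by rewrite {1}NFscale phiS.
have gen : forall k p x y i j, (forall x' y' i' j', wt x' y' i' = k -> idx i' j' = p ->
    [/\ x' = x, y' = y, i' = i & j' = j]) -> k = wt x y i -> p = idx i j ->
    exists2 al, al != 0 & phi (NF 1 x y i j) = NF al x y i j.
  move=> k p x y i j H ek ep; subst k p.
  have e := @onedim C _ _ x y i j _ H (hom _ _ _ (homog_NF 1 x y i j)).
  exists (coefJ (phi (NF 1 x y i j)) x y i j) => //.
  apply/eqP => e0; rewrite e0 NF0 -phi0 in e.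
  by move: (inj _ _ e) => /eqP; rewrite (negbTE (NF_neq0 _ _ _ _ _ (oner_neq0 _))).
have [al al0 pE4] := gen _ _ 1%N 0%N 0%N 0%N od_E4 erefl erefl.
have [be be0 pE6] := gen _ _ 0%N 1%N 0%N 0%N od_E6 erefl erefl.
have [ga ga0 pA] := gen _ _ 0%N 0%N 1%N 0%N od_A erefl erefl.
have [de de0 pB] := gen _ _ 0%N 0%N 0%N 1%N od_B erefl erefl.
have prod : forall u v x y i j x' y' i' j', u != 0 -> v != 0 ->
    phi (NF 1 x y i j) = NF u x y i j -> phi (NF 1 x' y' i' j') = NF v x' y' i' j' ->
    phi (NF 1 (x+x') (y+y') (i+i') (j+j')) = NF (u*v) (x+x') (y+y') (i+i') (j+j').
  move=> u v x y i j x' y' i' j' u0 v0 h1 h2.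
  exact: (etrans (congr1 (fun k => phi (NF k (x+x') (y+y') (i+i') (j+j'))) (esym (mulr1 1)))
    (etrans (congr1 phi (esym (bracket0_NF a b c _ _ x y i j x' y' i' j' (oner_neq0 _) (oner_neq0 _))))
    (etrans (brk 0 _ _) (etrans (congr2 (bracket a' b' c' 0) h1 h2)
       (bracket0_NF a' b' c' _ _ x y i j x' y' i' j' u0 v0))))).
have p2000 : phi (NF 1 2 0 0 0) = NF (al*al) 2 0 0 0 := prod _ _ 1 0 0 0 1 0 0 0 al0 al0 pE4 pE4.
have p3000 : phi (NF 1 3 0 0 0) = NF (al*al*al) 3 0 0 0 :=
  prod _ _ 2 0 0 0 1 0 0 0 (mulf_neq0 al0 al0) al0 p2000 pE4.
have p0200 : phi (NF 1 0 2 0 0) = NF (be*be) 0 2 0 0 := prod _ _ 0 1 0 0 0 1 0 0 be0 be0 pE6 pE6.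
have p1001 : phi (NF 1 1 0 0 1) = NF (al*de) 1 0 0 1 := prod _ _ 1 0 0 0 0 0 0 1 al0 de0 pE4 pB.
have p0110 : phi (NF 1 0 1 1 0) = NF (be*ga) 0 1 1 0 := prod _ _ 0 1 0 0 0 0 1 0 be0 ga0 pE6 pA.
have p2010 : phi (NF 1 2 0 1 0) = NF (al*al*ga) 2 0 1 0 :=
  prod _ _ 2 0 0 0 0 0 1 0 (mulf_neq0 al0 al0) ga0 p2000 pA.
have p0101 : phi (NF 1 0 1 0 1) = NF (be*de) 0 1 0 1 := prod _ _ 0 1 0 0 0 0 0 1 be0 de0 pE6 pB.
have h1 := etrans (esym (phi2 phi phiD phiNF _ _ _ _ _ _ _ _ _ _ _ _ p3000 p0200))
  (etrans (congr1 phi (esym (br_E4E6 a b c _ _ (oner_neq0 _) (oner_neq0 _))))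
  (etrans (brk 1 _ _) (etrans (congr2 (bracket a' b' c' 1) pE4 pE6) (br_E4E6 a' b' c' _ _ al0 be0)))).
have [e1 e2] := @NF2_coef C _ _ _ _ _ _ _ _ _ _ _ _ (isT : 3%N != 0%N) h1.
have h2 := etrans (esym (phi2 phi phiD phiNF _ _ _ _ _ _ _ _ _ _ _ _ p1001 p0110))
  (etrans (congr1 phi (esym (br_E4A a b c _ _ (oner_neq0 _) (oner_neq0 _))))
  (etrans (brk 1 _ _) (etrans (congr2 (bracket a' b' c' 1) pE4 pA) (br_E4A a' b' c' _ _ al0 ga0)))).
have [e3 e4] := @NF2_coef C _ _ _ _ _ _ _ _ _ _ _ _ (isT : 1%N != 0%N) h2.
have h3 := etrans (esym (phi2 phi phiD phiNF _ _ _ _ _ _ _ _ _ _ _ _ p2010 p0101))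
  (etrans (congr1 phi (esym (br_E4B a b c _ _ (oner_neq0 _) (oner_neq0 _))))
  (etrans (brk 1 _ _) (etrans (congr2 (bracket a' b' c' 1) pE4 pB) (br_E4B a' b' c' _ _ al0 de0)))).
have [e5 _] := @NF2_coef C _ _ _ _ _ _ _ _ _ _ _ _ (isT : 2%N != 0%N) h3.
exact: (@finalC C a b c a' b' c' al be ga de al0 be0 ga0 de0 e1 e2 e3 e4 e5).
Qed.
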